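(* Let $c\in\mathbb{R}^{m\times n}$ be a matrix (entries may be of any sign) such that $c_i([n])=C$ for all $i\in[m]$, for some real $C$. Let $A$ be an allocation that minimizes $\max_{i\in[m]}c_i(A_i)$ among all allocations and, subject to this, minimizes $\sum_{i\in[m]}c_i(A_i)$. Then $\sum_{i\in[m]}c_i(A_i)\le\frac1m\sum_{i\in[m]}c_i([n])$.
   Context: Notation: $[k]=\{1,\dots,k\}$; for $S\subseteq[n]$, $c_i(S)=\sum_{j\in S}c_{i,j}$. An allocation is a tuple $(A_1,\dots,A_m)$ of pairwise disjoint subsets of $[n]$ whose union is $[n]$. *)

(* Defs.v *)
From HB Require Import structures.
From mathcomp Require Import all_boot all_order all_algebra.
Set Implicit Arguments. Unset Strict Implicit. Unset Printing Implicit Defensive.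
Import Order.TTheory GRing.Theory Num.Theory.
Local Open Scope ring_scope.

Definition cost {R : numDomainType} {m n : nat} (c : 'M[R]_(m, n))
  (i : 'I_m) (S : {set 'I_n}) : R := \sum_(j in S) c i j.

Definition allocation {m n : nat} (A : 'I_m -> {set 'I_n}) : Prop :=
  (forall i k : 'I_m, i != k -> [disjoint A i & A k]) /\
  \bigcup_(i < m) A i = [set: 'I_n].

(* max_{i in [m]} c_i(A_i): the maximum of the (finite) list of bundle costs
   (the default value is one of the listed costs, so it is the true maximum
   whenever m > 0). *)
Definition maxcost {R : realDomainType} {m n : nat} (c : 'M[R]_(m, n))
  (A : 'I_m -> {set 'I_n}) : R :=
  let vals := [seq cost c i (A i) | i <- enum 'I_m] in
  \big[Num.max/head 0 vals]_(x <- vals) x.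

Definition sumcost {R : numDomainType} {m n : nat} (c : 'M[R]_(m, n))
  (A : 'I_m -> {set 'I_n}) : R := \sum_(i < m) cost c i (A i).

(* Main.v *)
Require Import Defs.
From HB Require Import structures.
From mathcomp Require Import all_boot all_order all_algebra all_fingroup.
Import Order.TTheory GRing.Theory Num.Theory.
Local Open Scope ring_scope.

Lemma exists_cyc (T : finType) (f : T -> T) (x0 : T) :
  exists x, fconnect f (f x) x.
Proof.
have := looping_order f x0; rewrite /looping => /trajectP [k lt_k Ek].
exists (iter k f x0).
set n := fingraph.order f x0 in lt_k Ek *.
set y := iter k f x0 in Ek *.
have Hy : y = iter (n - k) f y by rewrite /y -iterD subnK ?(ltnW lt_k).
rewrite [X in fconnect f _ X]Hy.
have -> : (n - k)%N = (n - k).-1.+1 by rewrite prednK // subn_gt0.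
rewrite iterSr; exact: fconnect_iter.
Qed.

Lemma bigmax_le (R : realDomainType) (b x0 : R) (s : seq R) :
  x0 <= b -> (forall x, x \in s -> x <= b) -> \big[Num.max/x0]_(x <- s) x <= b.
Proof.
move=> hx0; elim: s => [|a s IH] H; first by rewrite big_nil.
rewrite big_cons ge_max H ?mem_head //= IH // => x xs; apply: H.
by rewrite inE xs orbT.
Qed.

Lemma le_bigmax (R : realDomainType) (x0 x : R) (s : seq R) :
  x \in s -> x <= \big[Num.max/x0]_(y <- s) y.
Proof.
elim: s => [|a s IH] //; rewrite inE big_cons le_max => /orP [/eqP ->|xs].
  by rewrite lexx.
by rewrite IH ?orbT.
Qed.

Lemma cost_le_maxcost (R : realDomainType) m n (c : 'M[R]_(m, n)) B i :
  cost c i (B i) <= maxcost c B.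
Proof.
by apply: le_bigmax; apply/mapP; exists i; rewrite ?mem_enum.
Qed.

Lemma maxcost_le (R : realDomainType) m n (c : 'M[R]_(m, n)) B b :
  (forall i, cost c i (B i) <= b) -> (0 < m)%N -> maxcost c B <= b.
Proof.
move=> H m0; rewrite /maxcost; apply: bigmax_le.
  case: m c B H m0 => [//|m] c B H _.
  by rewrite enum_ordSl /=.
by move=> x /mapP [i _ ->].
Qed.

Theorem mainTheorem5 (R : realFieldType) (m n : nat) (c : 'M[R]_(m, n)) (C : R)
  (hC : forall i : 'I_m, cost c i [set: 'I_n] = C)
  (A : 'I_m -> {set 'I_n}) (hA : allocation A)
  (hmax : forall B : 'I_m -> {set 'I_n}, allocation B -> maxcost c A <= maxcost c B)
  (hsum : forall B : 'I_m -> {set 'I_n}, allocation B ->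
            maxcost c B = maxcost c A -> sumcost c A <= sumcost c B) :
  sumcost c A <= (m%:R)^-1 * \sum_(i < m) cost c i [set: 'I_n].
Proof.
case: (posnP m) => [m0|m0].
  subst m; by rewrite /sumcost !big_ord0 mulr0.
have -> : (m%:R)^-1 * \sum_(i < m) cost c i [set: 'I_n] = C.
  under eq_bigr do rewrite hC.
  rewrite sumr_const card_ord -[C *+ m]mulr_natr mulrCA mulVf ?mulr1 //.
  by rewrite pnatr_eq0 -lt0n.
case: hA => hdisj hcov.
have hpart : forall i, cost c i [set: 'I_n] = \sum_(l < m) cost c i (A l).
  move=> i; rewrite /cost -hcov.
  exact: (partition_disjoint_bigcup _ _ hdisj).
rewrite leNgt; apply/negP => hlt.
pose d l := cost c l (A l).
have hex : forall i, exists l, cost c i (A l) < d l.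
  move=> i; case: (boolP [exists l, cost c i (A l) < d l]) => [/existsP //|].
  rewrite negb_exists => /forallP H.
  have : sumcost c A <= C.
    rewrite -(hC i) hpart /sumcost; apply: ler_sum => l _.
    by move: (H l); rewrite -leNgt.
  by rewrite leNgt hlt.
pose f i := odflt i [pick l | cost c i (A l) < d l].
have hf : forall i, cost c i (A (f i)) < d (f i).
  move=> i; rewrite /f; case: pickP => [l //|H].
  by have [l] := hex i; rewrite H.
have [x0] : exists x0 : 'I_m, True by exists (Ordinal m0).
move=> _; have [x hx] := exists_cyc _ f x0.
rewrite fconnect_f in hx.
pose g y := if y \in fingraph.orbit f x then f y else y.
have ginj : injective g.
  move=> y1 y2; rewrite /g.
  case: ifP => h1; case: ifP => h2.
  - move=> E; by rewrite -(finv_f_cycle hx h1) E (finv_f_cycle hx h2).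
  - by move=> E; rewrite -E fingraph.mem_orbit in h2.
  - by move=> E; rewrite E fingraph.mem_orbit in h1.
  - by [].
pose s := perm ginj.
pose B i := A (s i).
have hB : allocation B.
  split.
    move=> i k ik; apply: hdisj; by rewrite (inj_eq perm_inj).
  rewrite -hcov /B; apply: esym; exact: (reindex_inj (@perm_inj _ s)).
have hle : forall i, cost c i (B i) <= d (s i).
  move=> i; rewrite /B permE /g; case: ifP => _; first exact: ltW.
  by rewrite lexx.
have hM : maxcost c B = maxcost c A.
  apply/eqP; rewrite eq_le hmax // andbT; apply: maxcost_le => // i.
  apply: le_trans (hle i) _; exact: cost_le_maxcost.
have := hsum B hB hM.
apply/negP; rewrite -ltNge.
have -> : sumcost c A = \sum_(i < m) d (s i).
  by rewrite /sumcost (reindex_inj (@perm_inj _ s)).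
rewrite /sumcost (bigD1 x) //= [X in _ < X](bigD1 x) //=.
apply: ltr_leD; last by apply: ler_sum => i _; apply: hle.
rewrite /B permE /g fingraph.in_orbit; exact: hf.
Qed.
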